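(* In the setting of the context, assume $q<q_c$. Then $\lim_{\hat q\to q,\ \hat q\in[0,q_c)}\hat P=P$, where $P$ and $\hat P$ are the positive definite solutions of the modified Riccati equations with parameters $q$ and $\hat q$ respectively.
   Context: Let $A\in\mathbb{R}^{n\times n}$, $B\in\mathbb{R}^{n\times m}$ with $(A,B)$ stabilizable, and let $Q$, $R$ be symmetric positive definite, and $q\in(0,1)$. For $p\in[0,1)$ the modified Riccati equation with parameter $p$ is $X=Q+A^\top XA-(1-p)A^\top XB(R+B^\top XB)^{-1}B^\top XA$; $q_c$ is the critical loss probability such that for every $p\in[0,q_c)$ this equation has a unique positive definite solution. *)

(* Defs.v *)
From HB Require Import structures.
From mathcomp Require Import all_boot all_order all_algebra.
From mathcomp Require Import complex.
From mathcomp Require Import all_classical all_reals all_analysis.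
Set Implicit Arguments. Unset Strict Implicit. Unset Printing Implicit Defensive.
Import Order.TTheory GRing.Theory Num.Theory.
Local Open Scope ring_scope.

Definition cmx (R : rcfType) (n : nat) (M : 'M[R]_n) : 'M[R[i]]_n :=
  map_mx (fun x : R => (x%:C)%C) M.

Definition is_eigenvalue (R : rcfType) (n : nat) (M : 'M[R]_n) (lam : R[i]) : Prop :=
  exists v : 'cV[R[i]]_n, v != 0 /\ cmx M *m v = lam *: v.

Definition schur_stable (R : rcfType) (n : nat) (M : 'M[R]_n) : Prop :=
  forall lam : R[i], is_eigenvalue M lam -> `|lam| < 1.

Definition stabilizable (R : rcfType) (n m : nat) (A : 'M[R]_n) (B : 'M[R]_(n, m)) : Prop :=
  exists K : 'M[R]_(m, n), schur_stable (A + B *m K).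

Definition sym_mx (R : rcfType) (n : nat) (X : 'M[R]_n) : Prop := X^T = X.

Definition posdef (R : rcfType) (n : nat) (X : 'M[R]_n) : Prop :=
  sym_mx X /\ forall x : 'cV[R]_n, x != 0 -> 0 < (x^T *m X *m x) 0 0.

Definition mod_riccati (R : rcfType) (n m : nat) (A : 'M[R]_n) (B : 'M[R]_(n, m))
    (Q : 'M[R]_n) (Rw : 'M[R]_m) (p : R) (X : 'M[R]_n) : Prop :=
  X = Q + A^T *m X *m A
        - (1 - p) *: (A^T *m X *m B *m invmx (Rw + B^T *m X *m B) *m B^T *m X *m A).

Definition pd_solution (R : rcfType) (n m : nat) (A : 'M[R]_n) (B : 'M[R]_(n, m))
    (Q : 'M[R]_n) (Rw : 'M[R]_m) (p : R) (X : 'M[R]_n) : Prop :=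
  posdef X /\ mod_riccati A B Q Rw p X.

(* Main.v *)
Require Import Defs.
From HB Require Import structures.
From mathcomp Require Import all_boot all_order all_algebra.
From mathcomp Require Import complex.
From mathcomp Require Import all_classical all_reals all_analysis.
From mathcomp Require Import ring lra.
Import Order.TTheory GRing.Theory Num.Theory numFieldNormedType.Exports.
Local Open Scope classical_set_scope.
Local Open Scope ring_scope.

Section QF.
Context {R : realType}.

Definition bf {n : nat} (M : 'M[R]_n) (u v : 'cV[R]_n) : R := (u^T *m M *m v) 0 0.
Definition qf {n : nat} (M : 'M[R]_n) (x : 'cV[R]_n) : R := bf M x x.

Lemma bfDl n (M : 'M[R]_n) u1 u2 v : bf M (u1 + u2) v = bf M u1 v + bf M u2 v.
Proof. by rewrite /bf linearD /= !mulmxDl mxE. Qed.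
Lemma bfDr n (M : 'M[R]_n) u v1 v2 : bf M u (v1 + v2) = bf M u v1 + bf M u v2.
Proof. by rewrite /bf mulmxDr mxE. Qed.
Lemma bfNl n (M : 'M[R]_n) u v : bf M (- u) v = - bf M u v.
Proof. by rewrite /bf linearN /= !mulNmx mxE. Qed.
Lemma bfNr n (M : 'M[R]_n) u v : bf M u (- v) = - bf M u v.
Proof. by rewrite /bf mulmxN mxE. Qed.
Lemma bfZl n (M : 'M[R]_n) a u v : bf M (a *: u) v = a * bf M u v.
Proof. by rewrite /bf linearZ /= -!scalemxAl mxE. Qed.
Lemma bfZr n (M : 'M[R]_n) a u v : bf M u (a *: v) = a * bf M u v.
Proof. by rewrite /bf -scalemxAr mxE. Qed.
Lemma bfMD n (M1 M2 : 'M[R]_n) u v : bf (M1 + M2) u v = bf M1 u v + bf M2 u v.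
Proof. by rewrite /bf mulmxDr mulmxDl mxE. Qed.
Lemma bfMN n (M : 'M[R]_n) u v : bf (- M) u v = - bf M u v.
Proof. by rewrite /bf mulmxN mulNmx mxE. Qed.
Lemma bfMZ n (M : 'M[R]_n) a u v : bf (a *: M) u v = a * bf M u v.
Proof. by rewrite /bf -scalemxAr -scalemxAl mxE. Qed.
Lemma bf_sym n (M : 'M[R]_n) u v : M^T = M -> bf M u v = bf M v u.
Proof.
move=> hM; rewrite /bf -[in LHS](trmxK (u^T *m M *m v)) mxE.
by rewrite !trmx_mul trmxK hM mulmxA.
Qed.
Lemma bf_conj k l (M : 'M[R]_k) (C : 'M[R]_(k, l)) u v :
  bf (C^T *m M *m C) u v = bf M (C *m u) (C *m v).
Proof. by rewrite /bf trmx_mul !mulmxA. Qed.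
Lemma bf_mulr n (M C : 'M[R]_n) u v : bf M u (C *m v) = bf (M *m C) u v.
Proof. by rewrite /bf !mulmxA. Qed.
Lemma qfD n (M : 'M[R]_n) u v : qf M (u + v) = qf M u + qf M v + bf M u v + bf M v u.
Proof. rewrite /qf bfDl !bfDr; ring. Qed.
Lemma qfN n (M : 'M[R]_n) u : qf M (- u) = qf M u.
Proof. by rewrite /qf bfNl bfNr opprK. Qed.
Lemma qf0 n (M : 'M[R]_n) : qf M 0 = 0.
Proof. by rewrite /qf /bf mulmx0 mxE. Qed.
Lemma bf_delta n (M : 'M[R]_n) i j : bf M (delta_mx i 0) (delta_mx j 0) = M i j.
Proof. by rewrite /bf trmx_delta -rowE -colE !mxE. Qed.

Lemma pd_unit n (M : 'M[R]_n) : (forall x, x != 0 -> 0 < qf M x) -> M \in unitmx.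
Proof.
move=> hM; rewrite unitmxE unitfE; apply/negP => /det0P [v v0 vM].
have : v^T != 0 by rewrite -(inj_eq (@trmx_inj _ _ _)) trmxK linear0.
move/hM; rewrite /qf /bf trmxK vM mul0mx mxE ltxx //.
Qed.


Definition psd {n} (Y : 'M[R]_n) := Y^T = Y /\ forall x, 0 <= qf Y x.

Lemma posdef_psd {n} {Y : 'M[R]_n} : posdef Y -> psd Y.
Proof.
move=> [hs hp]; split => // x; have [->|x0] := eqVneq x 0; first by rewrite qf0.
exact/ltW/hp.
Qed.

Section Ric.
Variables (n m : nat) (A : 'M[R]_n) (B : 'M[R]_(n, m)) (Rw : 'M[R]_m).
Hypothesis hR : posdef Rw.

Definition SS (Y : 'M[R]_n) := Rw + B^T *m Y *m B.
Definition KK (Y : 'M[R]_n) := - (invmx (SS Y) *m (B^T *m Y *m A)).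
Definition WW (Y : 'M[R]_n) :=
  A^T *m Y *m B *m invmx (Rw + B^T *m Y *m B) *m B^T *m Y *m A.

Variable Y : 'M[R]_n.
Hypothesis hY : psd Y.

Lemma qfSS v : qf (SS Y) v = qf Rw v + qf Y (B *m v).
Proof. by rewrite /qf /SS bfMD bf_conj. Qed.

Lemma SS_sym : (SS Y)^T = SS Y.
Proof.
by rewrite /SS linearD /= !trmx_mul trmxK hR.1 hY.1 mulmxA.
Qed.

Lemma SS_unit : SS Y \in unitmx.
Proof.
apply: pd_unit => v v0; rewrite qfSS.
by apply: lt_le_trans (hR.2 v v0) _; rewrite lerDl hY.2.
Qed.

Lemma Si_sym : (invmx (SS Y))^T = invmx (SS Y).
Proof. by rewrite trmx_inv SS_sym. Qed.

Lemma SS_psd v : 0 <= qf (SS Y) v.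
Proof. rewrite qfSS; apply: addr_ge0; [case: (posdef_psd hR) => _ h; exact: h | exact: hY.2]. Qed.

Lemma qf_Si y : qf (SS Y) (invmx (SS Y) *m y) = qf (invmx (SS Y)) y.
Proof.
rewrite /qf -bf_conj Si_sym mulVmx ?mul1mx //; exact: SS_unit.
Qed.

Lemma WW_eq x : qf (WW Y) x = qf (invmx (SS Y)) ((B^T *m Y *m A) *m x).
Proof.
rewrite /qf -bf_conj; congr bf.
by rewrite /WW !trmx_mul trmxK hY.1 !mulmxA.
Qed.

Lemma WW_ge0 x : 0 <= qf (WW Y) x.
Proof. by rewrite WW_eq -qf_Si SS_psd. Qed.

Lemma ML (K2 : 'M[R]_(m, n)) x :
  qf Y (A *m x) - qf (WW Y) x + qf (SS Y) ((K2 - KK Y) *m x)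
  = qf Y ((A + B *m K2) *m x) + qf Rw (K2 *m x).
Proof.
have -> : (K2 - KK Y) *m x = K2 *m x + invmx (SS Y) *m (B^T *m Y *m A *m x).
  by rewrite /KK opprK mulmxDl !mulmxA.
have -> : (A + B *m K2) *m x = A *m x + B *m (K2 *m x).
  by rewrite mulmxDl mulmxA.
set v := K2 *m x.
rewrite !qfD qf_Si -WW_eq qfSS.
have e1 : bf (SS Y) v (invmx (SS Y) *m (B^T *m Y *m A *m x)) = bf Y (A *m x) (B *m v).
  rewrite bf_mulr mulmxV; last exact: SS_unit.
  rewrite [RHS](bf_sym _ _ _ _ hY.1) /bf mulmx1 !trmx_mul !mulmxA //.
rewrite (bf_sym _ _ (invmx _ *m _) _ SS_sym) e1 (bf_sym _ _ (B *m v) _ hY.1).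
ring.
Qed.

Lemma ML1 (K2 : 'M[R]_(m, n)) x :
  qf Y (A *m x) - qf (WW Y) x <= qf Y ((A + B *m K2) *m x) + qf Rw (K2 *m x).
Proof. by rewrite -ML lerDl SS_psd. Qed.

Lemma ML2 x :
  qf Y (A *m x) - qf (WW Y) x = qf Y ((A + B *m KK Y) *m x) + qf Rw (KK Y *m x).
Proof. by rewrite -ML subrr mul0mx qf0 addr0. Qed.

End Ric.

Lemma qf_expand {n} (M : 'M[R]_n) x :
  qf M x = \sum_i \sum_j (x i 0 * M i j * x j 0).
Proof.
rewrite /qf /bf mxE exchange_big /=; apply: eq_bigr => i _.
rewrite mxE big_distrl /=; apply: eq_bigr => j _.
by rewrite !mxE.
Qed.

Lemma key_sq {n} (Q : 'M[R]_n) (hQ : posdef Q) (i : 'I_n) : exists2 g : R, 0 < g &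
  forall x : 'cV[R]_n, x i 0 ^+ 2 <= g * qf Q x.
Proof.
have Qu : Q \in unitmx by apply: pd_unit; exact: hQ.2.
pose y : 'cV[R]_n := invmx Q *m delta_mx i 0.
have hy : Q *m y = delta_mx i 0 by rewrite /y mulKVmx.
have y0 : y != 0.
  apply/negP => /eqP y0; move: hy; rewrite y0 mulmx0 => /matrixP /(_ i 0).
  by rewrite !mxE !eqxx /= => /esym /eqP; rewrite oner_eq0.
have gp : 0 < qf Q y by exact: hQ.2.
exists (qf Q y) => // x.
have bfy : bf Q y x = x i 0.
  rewrite (bf_sym _ _ _ _ hQ.1) /bf.
  have -> : x^T *m Q *m y = x^T *m delta_mx i 0 by rewrite -mulmxA hy.
  by rewrite -colE !mxE.
set s := x i 0 / qf Q y.
have hs : s * qf Q y = x i 0 by rewrite /s mulfVK // gt_eqF.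
have h0 := (posdef_psd hQ).2 (s *: y - x).
rewrite qfD qfN /qf bfZl bfZr bfNr bfNl bfZr bfZl in h0.
rewrite -/(qf Q y) -/(qf Q x) in h0.
rewrite (bf_sym _ _ x _ hQ.1) bfy in h0.
nra.
Qed.

Lemma dom {n} (Q M : 'M[R]_n) : posdef Q ->
  exists c, 0 <= c /\ forall x, qf M x <= c * qf Q x.
Proof.
move=> hQ.
have [g hg] : exists g : 'I_n -> R, forall i, 0 < g i /\
    forall x : 'cV[R]_n, x i 0 ^+ 2 <= g i * qf Q x.
  apply: (@fin_all_exists _ (fun=> R) (fun i (g : R) => 0 < g /\
    forall x : 'cV[R]_n, x i 0 ^+ 2 <= g * qf Q x)) => i.
  by have [g g0 hg] := key_sq Q hQ i; exists g.
exists (\sum_i \sum_j `|M i j| * (g i + g j)); split.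
  apply: sumr_ge0 => i _; apply: sumr_ge0 => j _.
  by apply: mulr_ge0 => //; apply: addr_ge0; apply: ltW; [exact: (hg i).1 | exact: (hg j).1].
move=> x; rewrite qf_expand mulr_suml; apply: ler_sum => i _.
rewrite mulr_suml; apply: ler_sum => j _.
have hi := (hg i).2 x; have hj := (hg j).2 x.
have hQx := (posdef_psd hQ).2 x.
set a := x i 0 in hi *; set b := x j 0 in hj *; set mm := M i j.
have hab : `|a * b| <= a ^+ 2 + b ^+ 2.
  rewrite normrM -[a ^+ 2]real_normK ?num_real // -[b ^+ 2]real_normK ?num_real //.
  have := normr_ge0 a; have := normr_ge0 b; nra.
apply: le_trans (_ : `|mm| * `|a * b| <= _).
  apply: le_trans (ler_norm _) _.
  by rewrite !normrM [X in X <= _]mulrAC mulrC.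
rewrite -mulrA; apply: ler_wpM2l => //.
apply: (le_trans hab).
nra.
Qed.

End QF.
Section G.
Context {R : realType} {V : Type}.
Variables (a1 a2 : V -> V) (w1 w2 : R).
Hypotheses (hw1 : 0 <= w1) (hw2 : 0 <= w2).
Definition Phi (f : V -> R) : V -> R := fun x => w1 * f (a1 x) + w2 * f (a2 x).
Variables (q0 z d e0 : V -> R) (e c1 c2 : R).
Hypotheses (hq0 : forall x, 0 <= q0 x) (hz0 : forall x, 0 <= z x)
  (hz : forall x, q0 x + Phi z x <= z x)
  (hd : forall x, d x <= Phi d x + e * e0 x)
  (he0 : forall x, e0 x <= c1 * q0 x) (hdc : forall x, d x <= c2 * q0 x)
  (he : 0 <= e) (hc1 : 0 <= c1) (hc2 : 0 <= c2).

Let T k := iter k Phi q0.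
Let S k x := \sum_(j < k) T j x.

Lemma Phi_ge0 f : (forall x, 0 <= f x) -> forall x, 0 <= Phi f x.
Proof. by move=> hf x; rewrite /Phi addr_ge0 // mulr_ge0. Qed.

Lemma T_ge0 k x : 0 <= T k x.
Proof. by elim: k x => [|k IH] x //=; apply: Phi_ge0. Qed.

Lemma iterz_ge0 k x : 0 <= iter k Phi z x.
Proof. by elim: k x => [|k IH] x //=; apply: Phi_ge0. Qed.

Lemma S_succ k x : S k.+1 x = q0 x + Phi (S k) x.
Proof.
rewrite /S big_ord_recl /=; congr (_ + _).
rewrite /Phi !mulr_sumr -big_split /=; apply: eq_bigr => j _.
by rewrite /T /= /Phi.
Qed.

Lemma bound1 k x : d x <= e * c1 * S k x + c2 * T k x.
Proof.
elim: k x => [|k IH] x.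
  by rewrite /S big_ord0 mulr0 add0r.
apply: (le_trans (hd x)).
have -> : T k.+1 x = Phi (T k) x by [].
rewrite S_succ /Phi.
apply: le_trans (_ : w1 * (e * c1 * S k (a1 x) + c2 * T k (a1 x)) +
   w2 * (e * c1 * S k (a2 x) + c2 * T k (a2 x)) + e * (c1 * q0 x) <= _).
  apply: lerD; first apply: lerD.
  - exact: ler_wpM2l.
  - exact: ler_wpM2l.
  - exact: ler_wpM2l.
by rewrite le_eqVlt; apply/orP; left; apply/eqP; ring.
Qed.

Lemma bound2 k x : S k x + iter k Phi z x <= z x.
Proof.
elim: k x => [|k IH] x.
  by rewrite /S big_ord0 add0r.
rewrite S_succ /=.
apply: le_trans (hz x).
rewrite -addrA lerD2l /Phi.
apply: le_trans (_ : w1 * (S k (a1 x) + iter k Phi z (a1 x)) +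
   w2 * (S k (a2 x) + iter k Phi z (a2 x)) <= _).
  by rewrite le_eqVlt; apply/orP; left; apply/eqP; ring.
by apply: lerD; apply: ler_wpM2l.
Qed.

Lemma S_le k x : S k x <= z x.
Proof. by apply: le_trans (bound2 k x); rewrite lerDl iterz_ge0. Qed.

Lemma small x eps : 0 < eps -> exists k, T k x <= eps.
Proof.
move=> heps; apply/not_existsP => hall.
have hlt k : eps < T k x by rewrite ltNge; apply/negP => /(hall k).
have z0 : 0 <= z x / eps by rewrite divr_ge0 // ltW.
set N := Num.Def.archi_bound (z x / eps).
have hN : z x / eps < N%:R := archi_boundP z0.
have : N%:R * eps <= S N x.
  rewrite /S; apply: le_trans (_ : \sum_(j < N) eps <= _).
    by rewrite sumr_const card_ord mulr_natl.
  by apply: ler_sum => j _; exact: ltW.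
have := S_le N x.
rewrite ltr_pdivrMr // in hN.
move=> h1 h2; have := lt_le_trans hN (le_trans h2 h1); by rewrite ltxx.
Qed.

Lemma G_bound x : d x <= e * c1 * z x.
Proof.
apply/ler_addgt0Pr => eps heps.
have c2p : 0 < c2 + 1 by rewrite ltr_wpDl.
have [k hk] := small x (eps / (c2 + 1)) (divr_gt0 heps c2p).
apply: (le_trans (bound1 k x)).
apply: lerD.
  by apply: ler_wpM2l; [exact: mulr_ge0 | exact: S_le].
rewrite ler_pdivlMr // in hk.
have hT := T_ge0 k x.
nra.
Qed.

End G.

Arguments SS {R n m}.
Arguments KK {R n m}.
Arguments WW {R n m}.

Section App.
Context {R : realType}.
Variables (n m : nat) (A : 'M[R]_n) (B : 'M[R]_(n, m)) (Q : 'M[R]_n) (Rw : 'M[R]_m).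
Hypotheses (hQ : posdef Q) (hR : posdef Rw).

Lemma sol_qf p X x : mod_riccati A B Q Rw p X ->
  qf X x = qf Q x + qf X (A *m x) - (1 - p) * qf (WW A B Rw X) x.
Proof.
move=> hX; have := congr1 (fun M => qf M x) hX => /= {1}->.
by rewrite /qf bfMD bfMN bfMZ bfMD bf_conj.
Qed.

Lemma solI p X (K2 : 'M[R]_(m, n)) x : p <= 1 -> pd_solution A B Q Rw p X ->
  qf X x <= qf Q x + p * qf X (A *m x)
            + (1 - p) * (qf X ((A + B *m K2) *m x) + qf Rw (K2 *m x)).
Proof.
move=> p1 [hXp hX]; have hY := posdef_psd hXp.
have h1 := @ML1 R n m A B Rw hR X hY K2 x.
rewrite (sol_qf p X x hX).
have hp : 0 <= 1 - p by rewrite subr_ge0.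
have := ler_wpM2l hp h1; nra.
Qed.

Lemma solJ p0 p X x : p0 <= p -> pd_solution A B Q Rw p X ->
  qf Q x + p0 * qf X (A *m x)
     + (1 - p0) * (qf X ((A + B *m KK A B Rw X) *m x) + qf Rw (KK A B Rw X *m x))
  <= qf X x.
Proof.
move=> hp0 [hXp hX]; have hY := posdef_psd hXp.
have h1 := @ML2 R n m A B Rw hR X hY x.
have hW := @WW_ge0 R n m A B Rw hR X hY x.
rewrite -h1 (sol_qf p X x hX).
nra.
Qed.

Lemma psd_sol p X : pd_solution A B Q Rw p X -> forall x, 0 <= qf X x.
Proof. by case=> /posdef_psd []. Qed.

Lemma monoA p p' X X' : 0 <= p -> p <= p' -> p' <= 1 ->
  pd_solution A B Q Rw p X -> pd_solution A B Q Rw p' X' ->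
  forall x, qf X x <= qf X' x.
Proof.
move=> p0 pp' p'1 hX hX' x.
have p1 : p <= 1 by apply: le_trans p'1.
have [c [c0 hc]] := dom Q X hQ.
pose K' := KK A B Rw X'.
have hz0 := psd_sol p' X' hX'.
have hq0 := (posdef_psd hQ).2.
have hp1 : 0 <= 1 - p by rewrite subr_ge0.
pose a1 : 'cV[R]_n -> 'cV[R]_n := fun y => A *m y.
pose a2 : 'cV[R]_n -> 'cV[R]_n := fun y => (A + B *m K') *m y.
have hz : forall y, qf Q y + Phi a1 a2 p (1 - p) (qf X') y <= qf X' y.
  move=> y; rewrite /Phi /a1 /a2.
  have h1 := solJ p p' X' y pp' hX'.
  have h2 := (posdef_psd hR).2 (K' *m y).
  have := mulr_ge0 hp1 h2; rewrite -/K' in h1 *; nra.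
pose d := fun y => qf X y - qf X' y.
have hd : forall y, d y <= Phi a1 a2 p (1 - p) d y + 0 * (fun=> 0) y.
  move=> y; rewrite /Phi /a1 /a2 /d mulr0 addr0.
  have h1 := solI p X K' y p1 hX.
  have h2 := solJ p' p' X' y (lexx p') hX'.
  have h3 := solJ p p' X' y pp' hX'.
  rewrite -/K' in h1 h2 h3 *; nra.
have he0 : forall y, (fun=> 0) y <= 0 * qf Q y by move=> y; rewrite mul0r.
have hdc : forall y, d y <= c * qf Q y.
  move=> y; apply: le_trans (hc y); rewrite /d lerBlDr lerDl; exact: hz0.
have := @G_bound R _ a1 a2 p (1 - p) p0 hp1 (qf Q) (qf X') d (fun=> 0)
  0 0 c hq0 hz0 hz hd he0 hdc (lexx 0) (lexx 0) c0 x.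
by rewrite !mul0r /d subr_le0.
Qed.

Lemma appB q p P X c1 : 0 <= p -> p <= q -> q <= 1 ->
  pd_solution A B Q Rw q P -> pd_solution A B Q Rw p X -> 0 <= c1 ->
  (forall y, qf (A^T *m P *m A) y <= c1 * qf Q y) ->
  forall x, qf P x - qf X x <= (q - p) * c1 * qf X x.
Proof.
move=> p0 pq q1 hP hX c10 hc1 x.
have p1 : p <= 1 by apply: le_trans q1.
have [c [c0 hc]] := dom Q P hQ.
pose K := KK A B Rw X.
have hz0 := psd_sol p X hX.
have hP0 := psd_sol q P hP.
have hq0 := (posdef_psd hQ).2.
have hp1 : 0 <= 1 - p by rewrite subr_ge0.
pose a1 : 'cV[R]_n -> 'cV[R]_n := fun y => A *m y.
pose a2 : 'cV[R]_n -> 'cV[R]_n := fun y => (A + B *m K) *m y.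
have hz : forall y, qf Q y + Phi a1 a2 p (1 - p) (qf X) y <= qf X y.
  move=> y; rewrite /Phi /a1 /a2.
  have h1 := solJ p p X y (lexx p) hX.
  have h2 := (posdef_psd hR).2 (K *m y).
  have := mulr_ge0 hp1 h2; rewrite -/K in h1 *; nra.
pose d := fun y => qf P y - qf X y.
pose e0 := fun y => qf P (A *m y).
have hd : forall y, d y <= Phi a1 a2 p (1 - p) d y + (q - p) * e0 y.
  move=> y; rewrite /Phi /a1 /a2 /d /e0.
  have h1 := solI q P K y q1 hP.
  have h2 := solJ p p X y (lexx p) hX.
  have h3 := (posdef_psd hR).2 (K *m y).
  have h4 := hP0 ((A + B *m K) *m y).
  have hqp : 0 <= q - p by rewrite subr_ge0.
  have := mulr_ge0 hqp h3; have := mulr_ge0 hqp h4.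
  rewrite -/K in h1 h2 *; nra.
have he0 : forall y, e0 y <= c1 * qf Q y.
  by move=> y; have := hc1 y; rewrite /e0 /qf bf_conj.
have hdc : forall y, d y <= c * qf Q y.
  move=> y; apply: le_trans (hc y); rewrite /d lerBlDr lerDl; exact: hz0.
have hqp : 0 <= q - p by rewrite subr_ge0.
exact: (@G_bound R _ a1 a2 p (1 - p) p0 hp1 (qf Q) (qf X) d e0
  (q - p) c1 c hq0 hz0 hz hd he0 hdc hqp c10 c0 x).
Qed.

Lemma appC q p p2 P X X2 c1 : 0 <= q -> q <= p -> p <= p2 -> p2 <= 1 ->
  pd_solution A B Q Rw q P -> pd_solution A B Q Rw p X ->
  pd_solution A B Q Rw p2 X2 -> 0 <= c1 ->
  (forall y, qf (A^T *m X2 *m A) y <= c1 * qf Q y) ->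
  forall x, qf X x - qf P x <= (p - q) * c1 * qf P x.
Proof.
move=> q0 qp pp2 p21 hP hX hX2 c10 hc1 x.
have p1 : p <= 1 by apply: le_trans p21.
have q1 : q <= 1 by apply: le_trans p1.
have p0 : 0 <= p by apply: le_trans qp.
have [c [c0 hc]] := dom Q X2 hQ.
pose K := KK A B Rw P.
have hz0 := psd_sol q P hP.
have hX0 := psd_sol p X hX.
have hq0 := (posdef_psd hQ).2.
have hq1 : 0 <= 1 - q by rewrite subr_ge0.
have mono := monoA p p2 X X2 p0 pp2 p21 hX hX2.
pose a1 : 'cV[R]_n -> 'cV[R]_n := fun y => A *m y.
pose a2 : 'cV[R]_n -> 'cV[R]_n := fun y => (A + B *m K) *m y.
have hz : forall y, qf Q y + Phi a1 a2 q (1 - q) (qf P) y <= qf P y.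
  move=> y; rewrite /Phi /a1 /a2.
  have h1 := solJ q q P y (lexx q) hP.
  have h2 := (posdef_psd hR).2 (K *m y).
  have := mulr_ge0 hq1 h2; rewrite -/K in h1 *; nra.
pose d := fun y => qf X y - qf P y.
pose e0 := fun y => qf X2 (A *m y).
have hpq : 0 <= p - q by rewrite subr_ge0.
have hd : forall y, d y <= Phi a1 a2 q (1 - q) d y + (p - q) * e0 y.
  move=> y; rewrite /Phi /a1 /a2 /d /e0.
  have h1 := solI p X K y p1 hX.
  have h2 := solJ q q P y (lexx q) hP.
  have h3 := (posdef_psd hR).2 (K *m y).
  have h4 := hX0 ((A + B *m K) *m y).
  have h5 := mono (A *m y).
  have := mulr_ge0 hpq h3; have := mulr_ge0 hpq h4.
  have := ler_wpM2l hpq h5.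
  rewrite -/K in h1 h2 *; nra.
have he0 : forall y, e0 y <= c1 * qf Q y.
  by move=> y; have := hc1 y; rewrite /e0 /qf bf_conj.
have hdc : forall y, d y <= c * qf Q y.
  move=> y; apply: le_trans (hc y); apply: le_trans (mono y).
  by rewrite /d lerBlDr lerDl; exact: hz0.
exact: (@G_bound R _ a1 a2 q (1 - q) q0 hq1 (qf Q) (qf P) d e0
  (p - q) c1 c hq0 hz0 hz hd he0 hdc hpq c10 c0 x).
Qed.

End App.

Lemma entry_bound {R : realType} {n} (D P : 'M[R]_n) k : D^T = D ->
  (forall x, `|qf D x| <= k * qf P x) ->
  forall i j, `|D i j| <= k * (qf P (delta_mx i 0 + delta_mx j 0 : 'cV[R]_n)
        + qf P (delta_mx i 0 : 'cV[R]_n) + qf P (delta_mx j 0 : 'cV[R]_n)).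
Proof.
move=> hD hk i j.
have hji : D j i = D i j by rewrite -[in LHS]hD mxE.
have e : qf D (delta_mx i 0 + delta_mx j 0 : 'cV[R]_n) =
    qf D (delta_mx i 0 : 'cV[R]_n) + qf D (delta_mx j 0 : 'cV[R]_n) + 2 * D i j.
  by rewrite qfD /qf !bf_delta hji; ring.
have h1 := hk (delta_mx i 0 + delta_mx j 0).
have h2 := hk (delta_mx i 0); have h3 := hk (delta_mx j 0).
rewrite e in h1.
move: h1 h2 h3; rewrite !ler_norml => /andP[h1 h1'] /andP[h2 h2'] /andP[h3 h3'].
apply/andP; split; nra.
Qed.

Lemma term_le_sum {R : realType} {n} (f : 'I_n -> 'I_n -> R) :
  (forall i j, 0 <= f i j) -> forall i j, f i j <= \sum_i \sum_j f i j.
Proof.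
move=> hf i j.
apply: le_trans (_ : \sum_j f i j <= _).
  by rewrite (bigD1 j) //= lerDl sumr_ge0.
rewrite [X in _ <= X](bigD1 i) //= lerDl; apply: sumr_ge0 => k _; exact: sumr_ge0.
Qed.

Theorem lemma4 (R : realType) (n m : nat)
  (A : 'M[R]_n) (B : 'M[R]_(n, m)) (Q : 'M[R]_n) (Rw : 'M[R]_m) (q qc : R)
  (hAB : stabilizable A B) (hQ : posdef Q) (hR : posdef Rw)
  (hq : 0 < q < 1)
  (hqc : forall p : R, 0 <= p < qc ->
           exists! X : 'M[R]_n, pd_solution A B Q Rw p X)
  (hqc1 : qc <= 1) (hqqc : q < qc)
  (P : 'M[R]_n) (hP : pd_solution A B Q Rw q P)
  (Phat : R -> 'M[R]_n)
  (hPhat : forall p : R, 0 <= p < qc -> pd_solution A B Q Rw p (Phat p)) :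
  Phat p @[p --> within [set p : R | 0 <= p < qc] (nbhs q)] --> P.
Proof.
have /andP[q0 q1] := hq.
pose p2 := (q + qc) / 2.
have qp2 : q < p2 by rewrite /p2; lra.
have p2qc : p2 < qc by rewrite /p2; lra.
have p21 : p2 <= 1 by apply: le_trans hqc1; exact: ltW.
have hX2 : pd_solution A B Q Rw p2 (Phat p2).
  apply: hPhat; apply/andP; split => //; lra.
have [cB [cB0 hcB]] := dom Q (A^T *m P *m A) hQ.
have [cC [cC0 hcC]] := dom Q (A^T *m Phat p2 *m A) hQ.
pose c := cB + cC.
have hP0 := (posdef_psd hP.1).2.
have key : forall t, 0 <= t -> t <= p2 ->
    forall x, `|qf (P - Phat t) x| <= `|t - q| * c * qf P x.
  move=> t t0 tp2 x.
  have ht : pd_solution A B Q Rw t (Phat t).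
    apply: hPhat; apply/andP; split => //; apply: le_lt_trans tp2 p2qc.
  have hX0 := (posdef_psd ht.1).2 x.
  have hPx := hP0 x.
  rewrite /qf bfMD bfMN -/(qf P x) -/(qf (Phat t) x).
  have [htq|htq] := lerP t q.
  - have mono := @monoA R n m A B Q Rw hQ hR t q (Phat t) P t0 htq (ltW q1) ht hP x.
    have hB := @appB R n m A B Q Rw hQ hR q t P (Phat t) cB t0 htq (ltW q1) hP ht cB0 hcB x.
    have e1 : `|qf P x - qf (Phat t) x| = qf P x - qf (Phat t) x.
      by rewrite ger0_norm // subr_ge0.
    have e2 : `|t - q| = q - t by rewrite distrC ger0_norm // subr_ge0.
    rewrite e1.
    have hqt : 0 <= q - t by rewrite subr_ge0.
    have := mulr_ge0 hqt cB0; have := mulr_ge0 hqt cC0.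
    rewrite /c; nra.
  - have mono := @monoA R n m A B Q Rw hQ hR q t P (Phat t) (ltW q0) (ltW htq)
      (le_trans tp2 p21) hP ht x.
    have hC := @appC R n m A B Q Rw hQ hR q t p2 P (Phat t) (Phat p2) cC (ltW q0)
      (ltW htq) tp2 p21 hP ht hX2 cC0 hcC x.
    have e1 : `|qf P x - qf (Phat t) x| = - (qf P x - qf (Phat t) x).
      by rewrite ler0_norm // subr_le0.
    have e2 : `|t - q| = t - q by rewrite ger0_norm // subr_ge0 ltW.
    rewrite e1.
    have hqt : 0 <= t - q by rewrite subr_ge0 ltW.
    have := mulr_ge0 hqt cB0; have := mulr_ge0 hqt cC0.
    rewrite /c; nra.
pose ff := fun i j : 'I_n => qf P (delta_mx i 0 + delta_mx j 0 : 'cV[R]_n)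
        + qf P (delta_mx i 0 : 'cV[R]_n) + qf P (delta_mx j 0 : 'cV[R]_n).
have ff0 : forall i j, 0 <= ff i j by move=> i j; rewrite /ff !addr_ge0.
pose Mb := \sum_i \sum_j ff i j.
have Mb0 : 0 <= Mb by apply: sumr_ge0 => i _; apply: sumr_ge0.
have c0 : 0 <= c by rewrite addr_ge0.
have cM0 : 0 < c * Mb + 1 by rewrite ltr_wpDl // mulr_ge0.
apply/cvgrPdist_le => /= eps heps.
rewrite near_withinE; apply/nbhs_ballP.
have dp : 0 < Num.min (p2 - q) (eps / (c * Mb + 1)).
  by rewrite lt_min subr_gt0 qp2 divr_gt0.
exists (Num.min (p2 - q) (eps / (c * Mb + 1))) => // t /= ht /andP[t0 tqc].
rewrite -ball_normE /= lt_min in ht; have /andP[ht1 ht2] := ht.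
have tp2 : t <= p2.
  have := ler_norm (t - q); rewrite distrC; lra.
have hk := key t t0 tp2.
have symD : (P - Phat t)^T = P - Phat t.
  have htt : 0 <= t < qc by rewrite t0 tqc.
  by rewrite linearB /= (hP.1.1 : P^T = P) ((hPhat t htt).1.1 : _ = _).
have -> : `|P - Phat t| = mx_norm (P - Phat t) by [].
rewrite mx_normrE; apply: bigmax_le => /=; first exact: ltW heps.
move=> ij _.
have := entry_bound (P - Phat t) P _ symD hk ij.1 ij.2; rewrite -/(ff ij.1 ij.2) => h.
apply: (le_trans h).
have hff := term_le_sum ff ff0 ij.1 ij.2; rewrite -/Mb in hff.
rewrite ltr_pdivlMr // in ht2.
rewrite distrC in ht2.
have hn := normr_ge0 (t - q).
apply: le_trans (_ : `|t - q| * c * Mb <= _).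
  by apply: ler_wpM2l => //; rewrite mulr_ge0.
apply: ltW; apply: le_lt_trans ht2.
nra.
Qed.
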